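(* Let $\beta>0$, $k>0$, $u_0<0$, $\Phi(u)=\beta\left(-\frac{u^4}{4}+\frac{k+u_0}{3}u^3-\frac{ku_0}{2}u^2\right)$, and let $\delta$ be the involution defined in the context. Then (i) if $-k<u_0<0$, $u+\delta(u)<0$ for all $u\in(0,u_1)$; (ii) if $u_0<-k$, $u+\delta(u)>0$ for all $u\in(0,k)$.
   Context: Case $-k<u_0<0$: $u_1$ is the unique point of $(0,k)$ with $\Phi(u_1)=\Phi(u_0)$, and for $u\in(0,u_1)$, $\delta(u)$ is the unique $w\in(u_0,0)$ with $\Phi(w)=\Phi(u)$. Case $u_0<-k$: $w_2$ is the unique point of $(u_0,0)$ with $\Phi(w_2)=\Phi(k)$, and for $u\in(0,k)$, $\delta(u)$ is the unique $w\in(w_2,0)$ with $\Phi(w)=\Phi(u)$. *)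

(* Defs.v *)
From Stdlib Require Import Reals.
Open Scope R_scope.

Definition Phi (beta k u0 u : R) : R :=
  beta * (- (u ^ 4) / 4 + (k + u0) / 3 * u ^ 3 - k * u0 / 2 * u ^ 2).

(* Main.v *)
Require Import Defs.
From Stdlib Require Import Reals Lra Psatz.
From Coquelicot Require Import Coquelicot.
Open Scope R_scope.

Lemma Phi_der beta k u0 x :
  is_derive (Phi beta k u0) x (- beta * x * (x - k) * (x - u0)).
Proof.
  unfold Phi. auto_derive; [exact I|]. field.
Qed.

Lemma Phi_odd beta k u0 x :
  Phi beta k u0 x - Phi beta k u0 (- x) = beta * (2 * (k + u0) / 3) * x ^ 3.
Proof. unfold Phi. field. Qed.

Lemma Phi_inc beta k u0 (hb : 0 < beta) (hk : 0 < k) (hu0 : u0 < 0) x y :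
  0 < x -> x < y -> y < k -> Phi beta k u0 x < Phi beta k u0 y.
Proof.
  intros. apply (incr_function _ 0 k (fun x => - beta * x * (x - k) * (x - u0))).
  - intros; apply Phi_der.
  - simpl; intros t h1 h2.
    assert (0 < beta * t * (k - t) * (t - u0)).
    { apply Rmult_lt_0_compat; [apply Rmult_lt_0_compat;[apply Rmult_lt_0_compat|]|]; lra. }
    nra.
  - simpl; lra.
  - lra.
  - simpl; lra.
Qed.

Lemma Phi_dec beta k u0 (hb : 0 < beta) (hk : 0 < k) (hu0 : u0 < 0) x y :
  u0 < x -> x < y -> y < 0 -> Phi beta k u0 y < Phi beta k u0 x.
Proof.
  intros. cut (- Phi beta k u0 x < - Phi beta k u0 y). lra.
  apply (incr_function (fun z => - Phi beta k u0 z) u0 0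
          (fun x => - (- beta * x * (x - k) * (x - u0)))).
  - intros; unfold Phi; auto_derive; [exact I|]; field.
  - simpl; intros t h1 h2.
    assert (0 < beta * (- t) * (k - t) * (t - u0)).
    { apply Rmult_lt_0_compat; [apply Rmult_lt_0_compat;[apply Rmult_lt_0_compat|]|]; lra. }
    nra.
  - simpl; lra.
  - lra.
  - simpl; lra.
Qed.

Theorem lemma3p5 (beta k u0 : R) (hbeta : 0 < beta) (hk : 0 < k) (hu0 : u0 < 0) :
  (* (i) case -k < u0 < 0 *)
  (-k < u0 ->
   forall u1 : R, 0 < u1 < k -> Phi beta k u0 u1 = Phi beta k u0 u0 ->
   forall u : R, 0 < u < u1 ->
   forall w : R, u0 < w < 0 -> Phi beta k u0 w = Phi beta k u0 u ->
   u + w < 0)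
  /\
  (* (ii) case u0 < -k *)
  (u0 < -k ->
   forall w2 : R, u0 < w2 < 0 -> Phi beta k u0 w2 = Phi beta k u0 k ->
   forall u : R, 0 < u < k ->
   forall w : R, w2 < w < 0 -> Phi beta k u0 w = Phi beta k u0 u ->
   u + w > 0).
Proof.
  split.
  - intros hk0 u1 hu1 e1 u hu w hw e.
    assert (hodd : forall x, 0 < x -> Phi beta k u0 (- x) < Phi beta k u0 x).
    { intros x hx. pose proof (Phi_odd beta k u0 x).
      assert (0 < beta * (2 * (k + u0) / 3) * x ^ 3).
      { apply Rmult_lt_0_compat; [apply Rmult_lt_0_compat|apply pow_lt]; lra. }
      lra. }
    destruct (Rlt_or_le u0 (- u)) as [h|h].
    + destruct (Rlt_or_le (u + w) 0) as [|h2]; [assumption|exfalso].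
      destruct (Req_dec w (- u)) as [->|hne].
      * pose proof (hodd u ltac:(lra)). lra.
      * pose proof (Phi_dec beta k u0 hbeta hk hu0 (- u) w h ltac:(lra) ltac:(lra)).
        pose proof (hodd u ltac:(lra)). lra.
    + exfalso.
      pose proof (Phi_inc beta k u0 hbeta hk hu0 u u1 ltac:(lra) ltac:(lra) ltac:(lra)).
      pose proof (hodd (- u0) ltac:(lra)) as ho. rewrite Ropp_involutive in ho.
      destruct (Req_dec u (- u0)) as [->|hne].
      * lra.
      * pose proof (Phi_inc beta k u0 hbeta hk hu0 (- u0) u ltac:(lra) ltac:(lra) ltac:(lra)).
        lra.
  - intros hk0 w2 hw2 e2 u hu w hw e.
    destruct (Rlt_or_le (- u) w) as [|h]; [lra|exfalso].
    pose proof (Phi_odd beta k u0 u).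
    assert (0 < beta * (2 * (- (k + u0)) / 3) * u ^ 3).
    { apply Rmult_lt_0_compat; [apply Rmult_lt_0_compat|apply pow_lt]; lra. }
    destruct (Req_dec w (- u)) as [->|hne].
    + lra.
    + pose proof (Phi_dec beta k u0 hbeta hk hu0 w (- u) ltac:(lra) ltac:(lra) ltac:(lra)).
      lra.
Qed.
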